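(* Let $n,k,d$ be integers with $1\le k\le d<n$, let $\alpha>0$, and for each integer $M\ge 0$ put $n_M=n+M$, $k_M=k+M$, $d_M=d+M$. Let $s\in(0,1]$ be fixed and put $i=i_M=1+s(k_M-1)$. Then $$\lim_{M\to\infty}\frac{P^{1}_{n_M,k_M,d_M}\!\left(\alpha,\frac{(d_M-k_M+i)\alpha}{d_M-k_M+1}\right)}{C_{k_M,d_M}\!\left(\alpha,\frac{(d_M-k_M+i)\alpha}{d_M-k_M+1}\right)}=1.$$
   Context: For integers $1\le k\le d$ and $\alpha,\gamma>0$, $C_{k,d}(\alpha,\gamma)=\sum_{j=0}^{k-1}\min\{\alpha,\frac{d-j}{d}\gamma\}$ (the functional-repair capacity). For integers $1\le k\le d<n$ and $\alpha>0$, the function $P^{1}_{n,k,d}$ is defined at the points $\gamma=\frac{(d-k+x)\alpha}{d-k+1}$, $x\in[1,k]$, as follows: for integer $x=i\in\{1,\dots,k\}$, $P^{1}_{n,k,d}\left(\alpha,\frac{(d-k+i)\alpha}{d-k+1}\right)=\frac{n i\alpha}{n-k+i}$, and for non-integer $x\in[1,k]$ the value is obtained by linear interpolation (in $\gamma$) between the values at the two neighbouring integers, i.e. $x\mapsto P^1_{n,k,d}\left(\alpha,\frac{(d-k+x)\alpha}{d-k+1}\right)$ is the piecewise linear curve connecting these points. *)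

(* Defs.v *)
From Stdlib Require Import Reals Lra.
From Coquelicot Require Import Coquelicot.
Open Scope R_scope.

Fixpoint Csum (m d : nat) (a g : R) : R :=
  match m with
  | O => 0
  | S m' => Csum m' d a g + Rmin a ((INR d - INR m') / INR d * g)
  end.

Definition Ccap (k d : nat) (a g : R) : R := Csum k d a g.

Definition gam (k d : nat) (a x : R) : R :=
  (INR d - INR k + x) * a / (INR d - INR k + 1).

Definition P1int (n k : nat) (a : R) (i : nat) : R :=
  INR n * INR i * a / (INR n - INR k + INR i).

(* P^1_{n,k,d}(alpha, gamma), for gamma = gam k d alpha x with x in [1,k]:
   x is recovered from gamma; at integer x = i the value is P1int; otherwise
   linear interpolation in gamma between the neighbouring integers
   i = floor x and i+1.  (Values outside x in [1,k] are irrelevant.) *)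
Definition P1 (n k d : nat) (a g : R) : R :=
  let x := g * (INR d - INR k + 1) / a - (INR d - INR k) in
  let i := Z.to_nat (Int_part x) in
  if (k <=? i)%nat then P1int n k a k
  else P1int n k a i
       + (g - gam k d a (INR i)) / (gam k d a (INR (S i)) - gam k d a (INR i))
         * (P1int n k a (S i) - P1int n k a i).

(* Main.v *)
From Stdlib Require Import Reals Lra Lia ZArith.
From Coquelicot Require Import Coquelicot.
Require Import Defs.
Open Scope R_scope.

Lemma lin_pinf r t : 0 < t -> is_lim_seq (fun M => r + t * INR M) p_infty.
Proof.
  intros ht. apply is_lim_seq_spec. intros B.
  set (z := up (Rabs ((B - r) / t))).
  destruct (archimed (Rabs ((B - r) / t))) as [H1 _].
  assert (Hz : (0 <= z)%Z). { apply le_IZR. fold z in H1. pose proof (Rabs_pos ((B-r)/t)). lra. }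
  exists (Z.to_nat z). intros M HM.
  apply le_INR in HM. rewrite INR_IZR_INZ, Z2Nat.id in HM by exact Hz.
  fold z in H1.
  assert (Hb : (B - r)/t < INR M).
  { pose proof (Rle_abs ((B-r)/t)). lra. }
  apply (Rmult_lt_compat_l t) in Hb; [|exact ht].
  replace (t * ((B - r)/t)) with (B - r) in Hb by (field; lra). lra.
Qed.

Lemma linfrac p q r t : 0 < t ->
  is_lim_seq (fun M => (p + q * INR M) / (r + t * INR M)) (q / t).
Proof.
  intros ht.
  assert (H0 := lin_pinf r t ht).
  assert (Hi : is_lim_seq (fun M => / (r + t * INR M)) 0).
  { replace (Finite 0) with (Rbar_inv p_infty) by reflexivity.
    apply is_lim_seq_inv; [exact H0| discriminate]. }
  assert (Hs := is_lim_seq_scal_l _ (p - q * r / t) _ Hi).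
  simpl in Hs.
  assert (Hp := is_lim_seq_plus' _ _ (q/t) _ (is_lim_seq_const (q/t)) Hs).
  replace (q / t) with (q/t + (p - q * r / t) * 0) by ring.
  apply is_lim_seq_ext_loc with (2 := Hp).
  apply is_lim_seq_spec in H0. destruct (H0 0) as [N HN].
  exists N. intros M HM. specialize (HN M HM). simpl in HN. field. lra.
Qed.

Lemma div_le_l x y b : 0 < b -> x <= y * b -> x / b <= y.
Proof. intros hb h. assert (x / b * b = x) by (field; lra). nra. Qed.
Lemma le_div_r x y b : 0 < b -> x * b <= y -> x <= y / b.
Proof. intros hb h. assert (y / b * b = y) by (field; lra). nra. Qed.

Lemma Csum_upper m D a g : 0 <= a -> Csum m D a g <= INR m * a.
Proof.
  intros ha. induction m as [|m IH]; simpl Csum. simpl; lra.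
  rewrite S_INR. pose proof (Rmin_l a ((INR D - INR m) / INR D * g)). lra.
Qed.

Lemma Csum_lower m D a g J : 0 <= a -> 0 <= J ->
  (forall j, (j < m)%nat -> 0 <= (INR D - INR j) / INR D * g) ->
  (forall j, (j < m)%nat -> INR j <= J -> a <= (INR D - INR j) / INR D * g) ->
  a * Rmin (INR m) J <= Csum m D a g.
Proof.
  intros ha hJ. induction m as [|m IH]; intros H0 H1; simpl Csum.
  - simpl. unfold Rmin; destruct Rle_dec; lra.
  - assert (IH' : a * Rmin (INR m) J <= Csum m D a g).
    { apply IH; intros; [apply H0|apply H1]; auto; lia. }
    rewrite S_INR.
    pose proof (H0 m (Nat.lt_succ_diag_r m)) as Hp.
    destruct (Rle_dec (INR m) J) as [Hm|Hm].
    + pose proof (H1 m (Nat.lt_succ_diag_r m) Hm) as Ha.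
      rewrite Rmin_left in IH' by lra. rewrite (Rmin_left a) by lra.
      assert (Rmin (INR m + 1) J <= INR m + 1) by apply Rmin_l.
      assert (a * Rmin (INR m + 1) J <= a * (INR m + 1)) by (apply Rmult_le_compat_l; lra). lra.
    + rewrite Rmin_right in IH' by lra. rewrite Rmin_right by lra.
      assert (0 <= Rmin a ((INR D - INR m) / INR D * g)).
      { unfold Rmin; destruct Rle_dec; lra. } lra.
Qed.

Definition pf (N c a m : R) := N * m * a / (c + m).

Lemma pf_mono N c a m1 m2 : 0 < c -> 0 <= N -> 0 <= a -> 0 <= m1 <= m2 ->
  pf N c a m1 <= pf N c a m2.
Proof.
  intros hc hN ha hm. unfold pf. apply div_le_l. lra.
  replace (N * m2 * a / (c + m2) * (c + m1)) with ((N * a) * (m2 * (c + m1)) / (c + m2)) by (field; lra).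
  apply le_div_r. lra. assert (0 <= N * a) by nra.
  assert (0 <= (N * a) * (c * (m2 - m1))) by (apply Rmult_le_pos; nra). nra.
Qed.

Lemma pf_le N c a m : 0 < c -> 0 <= N -> 0 <= a -> 0 <= m -> pf N c a m <= N * a.
Proof. intros. unfold pf. apply div_le_l. lra. assert (0 <= N * a) by nra.
  assert (0 <= (N * a) * c) by (apply Rmult_le_pos; nra). nra. Qed.

Lemma P1_bounds N K D a i : 0 < a -> (K <= D)%nat -> (K < N)%nat -> 1 <= i <= INR K ->
  let g := (INR D - INR K + i) * a / (INR D - INR K + 1) in
  pf (INR N) (INR N - INR K) a (i - 1) <= P1 N K D a g <= INR N * a.
Proof.
  intros ha hKD hKN hi g.
  assert (hd : INR K <= INR D) by (apply le_INR; lia).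
  assert (hc : INR K < INR N) by (apply lt_INR; lia).
  assert (hN : 0 <= INR N) by apply pos_INR.
  unfold P1; cbv zeta.
  replace (g * (INR D - INR K + 1) / a - (INR D - INR K)) with i
    by (unfold g; field; lra).
  destruct (base_Int_part i) as [B1 B2].
  assert (Hz : (0 <= Int_part i)%Z). { apply le_IZR. apply Rlt_le. apply (Rplus_lt_reg_r 1). simpl. lra. }
  set (j := Z.to_nat (Int_part i)).
  assert (Hj : INR j = IZR (Int_part i)).
  { unfold j. rewrite INR_IZR_INZ, Z2Nat.id by exact Hz. reflexivity. }
  rewrite <- Hj in B1, B2.
  destruct (K <=? j)%nat eqn:E.
  - unfold P1int. replace (INR N - INR K + INR K) with (INR N) by ring.
    replace (INR N * INR K * a / INR N) with (pf (INR N) (INR N - INR K) a (INR K)).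
    2:{ unfold pf. replace (INR N - INR K + INR K) with (INR N) by ring. reflexivity. }
    split. apply pf_mono; lra. apply pf_le; lra.
  - unfold gam. rewrite S_INR.
    replace (((g - (INR D - INR K + INR j) * a / (INR D - INR K + 1)) /
      ((INR D - INR K + (INR j + 1)) * a / (INR D - INR K + 1) -
       (INR D - INR K + INR j) * a / (INR D - INR K + 1)))) with (i - INR j)
      by (unfold g; field; lra).
    unfold P1int. rewrite S_INR.
    change (INR N * INR j * a / (INR N - INR K + INR j)) with (pf (INR N) (INR N - INR K) a (INR j)).
    change (INR N * (INR j + 1) * a / (INR N - INR K + (INR j + 1))) with (pf (INR N) (INR N - INR K) a (INR j + 1)).
    assert (h0 : 0 <= INR j) by apply pos_INR.
    assert (p1 := pf_mono (INR N) (INR N - INR K) a (i-1) (INR j) ltac:(lra) hN ltac:(lra) ltac:(lra)).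
    assert (p2 := pf_mono (INR N) (INR N - INR K) a (INR j) (INR j + 1) ltac:(lra) hN ltac:(lra) ltac:(lra)).
    assert (p3 := pf_le (INR N) (INR N - INR K) a (INR j + 1) ltac:(lra) hN ltac:(lra) ltac:(lra)).
    split; nra.
Qed.

Lemma ratio_bounds N K D a i : 0 < a -> (K <= D)%nat -> (K < N)%nat -> 1 < i <= INR K ->
  let g := (INR D - INR K + i) * a / (INR D - INR K + 1) in
  pf (INR N) (INR N - INR K) a (i - 1) / (INR K * a)
  <= P1 N K D a g / Ccap K D a g
  <= INR N * a / (a * (INR D * (i - 1) / (INR D - INR K + i))).
Proof.
  intros ha hKD hKN hi g.
  assert (hd : INR K <= INR D) by (apply le_INR; lia).
  assert (hc : INR K < INR N) by (apply lt_INR; lia).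
  assert (hN : 0 <= INR N) by apply pos_INR.
  destruct (P1_bounds N K D a i ha hKD hKN ltac:(lra)) as [Pl Pu]. fold g in Pl, Pu.
  set (P := P1 N K D a g) in *.
  set (J := INR D * (i - 1) / (INR D - INR K + i)).
  assert (hg : 0 < g). { unfold g. apply Rdiv_lt_0_compat; nra. }
  assert (hJ0 : 0 < J). { unfold J. apply Rdiv_lt_0_compat; nra. }
  assert (hJK : J <= INR K).
  { unfold J. apply div_le_l. lra.
    assert ((INR D - INR K) * i <= (INR D - INR K) * INR K) by (apply Rmult_le_compat_l; lra).
    nra. }
  assert (Cu : Ccap K D a g <= INR K * a) by (apply Csum_upper; lra).
  assert (Cl : a * J <= Ccap K D a g).
  { replace J with (Rmin (INR K) J) at 1 by (apply Rmin_right; lra).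
    apply Csum_lower; try lra.
    - intros j hj. apply lt_INR in hj. apply Rmult_le_pos; [|lra].
      apply Rdiv_le_0_compat; lra.
    - intros j hj hjJ. apply lt_INR in hj.
      replace ((INR D - INR j) / INR D * g) with
        ((INR D - INR j) * (INR D - INR K + i) * a / (INR D * (INR D - INR K + 1)))
        by (unfold g; field; lra).
      apply le_div_r. nra.
      unfold J in hjJ.
      assert (h2 : INR j * (INR D - INR K + i) <= INR D * (i - 1)).
      { apply (Rmult_le_compat_r (INR D - INR K + i)) in hjJ; [|lra].
        replace (INR D * (i - 1) / (INR D - INR K + i) * (INR D - INR K + i)) with (INR D * (i-1)) in hjJ by (field; lra). lra. }
      assert (0 <= a * (INR D * (i - 1) - INR j * (INR D - INR K + i))) by (apply Rmult_le_pos; lra).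
      nra. }
  fold J.
  assert (Lp0 : 0 <= pf (INR N) (INR N - INR K) a (i - 1)).
  { unfold pf. apply Rdiv_le_0_compat; [|lra]. apply Rmult_le_pos; [|lra]. apply Rmult_le_pos; lra. }
  set (Lp := pf (INR N) (INR N - INR K) a (i - 1)) in *.
  set (C := Ccap K D a g) in *.
  assert (hC : 0 < C) by nra.
  split.
  - apply le_div_r. lra.
    assert (e : Lp / (INR K * a) * (INR K * a) = Lp) by (field; nra).
    assert (0 <= Lp / (INR K * a)) by (apply Rdiv_le_0_compat; nra).
    nra.
  - apply div_le_l. lra.
    assert (e : INR N * a / (a * J) * (a * J) = INR N * a) by (field; nra).
    assert (0 <= INR N * a / (a * J)) by (apply Rdiv_le_0_compat; nra).
    nra.
Qed.

Theorem theorem5p1 (n k d : nat) (a s : R)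
  (hk1 : (1 <= k)%nat) (hkd : (k <= d)%nat) (hdn : (d < n)%nat)
  (ha : 0 < a) (hs0 : 0 < s) (hs1 : s <= 1) :
  is_lim_seq
    (fun M : nat =>
       let i := 1 + s * (INR (k + M) - 1) in
       let g := (INR (d + M) - INR (k + M) + i) * a
                / (INR (d + M) - INR (k + M) + 1) in
       P1 (n + M) (k + M) (d + M) a g / Ccap (k + M) (d + M) a g)
    (Finite 1).
Proof.
  assert (hk : 1 <= INR k) by (apply (le_INR 1); lia).
  assert (hkd' : INR k <= INR d) by (apply le_INR; lia).
  assert (hdn' : INR d < INR n) by (apply lt_INR; lia).
  apply is_lim_seq_le_le_loc with
    (u := fun M => ((INR n + 1 * INR M) / (INR k + 1 * INR M)) *
          ((s * (INR k - 1) + s * INR M) / ((INR n - INR k + s * (INR k - 1)) + s * INR M)))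
    (w := fun M => ((INR n + 1 * INR M) / (INR d + 1 * INR M)) *
          (((INR d - INR k + 1 + s * (INR k - 1)) + s * INR M) / (s * (INR k - 1) + s * INR M))).
  - exists 1%nat. intros M HM. cbv zeta.
    assert (hM : 1 <= INR M) by (apply (le_INR 1); lia).
    set (i := 1 + s * (INR (k + M) - 1)).
    assert (hi : 1 < i <= INR (k + M)).
    { unfold i. rewrite plus_INR. split; nra. }
    destruct (ratio_bounds (n + M) (k + M) (d + M) a i ha ltac:(lia) ltac:(lia) hi) as [h1 h2].
    split.
    + eapply Rle_trans; [|exact h1]. right. unfold pf, i. rewrite !plus_INR.
      field. repeat split; nra.
    + eapply Rle_trans; [exact h2|]. right. unfold i. rewrite !plus_INR.
      field. repeat split; nra.
  - replace (Finite 1) with (Finite ((1/1) * (s/s))) by (f_equal; field; lra).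
    apply is_lim_seq_mult'; apply linfrac; lra.
  - replace (Finite 1) with (Finite ((1/1) * (s/s))) by (f_equal; field; lra).
    apply is_lim_seq_mult'; apply linfrac; lra.
Qed.
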